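(* Fix $\alpha>0$, $\gamma>0$, $\Sigma_\epsilon>0$, $\omega_1\in[0,1)$, $\omega_2\in[0,1]$. Let $$T(x)=\left(\frac{\omega_2}{x^2}+\frac{(1-\omega_2)\alpha^2\gamma^2\Sigma_\epsilon}{(1+\gamma-x)^2}\right)^{-1/2},\qquad f_y(x)=\left(\frac{\omega_1}{x^2}+\frac{(1-\omega_1)\gamma^2\alpha^2\Sigma_\epsilon}{(1+\gamma-y)^2}\right)^{-1/2}.$$ Suppose $(\lambda_{2,t})_{t\ge0}$, with $\lambda_{2,t+1}=T(\lambda_{2,t})$ and $\lambda_{2,t}\in[1,1+\gamma)$ for all $t$, is periodic of minimal period $p$. Then the forced dynamics $\lambda_{1,t+1}=f_{\lambda_{2,t}}(\lambda_{1,t})$ is periodic of the same period: there is a sequence $(x_t)_{t\ge0}$ of minimal period $p$ with $x_{t+1}=f_{\lambda_{2,t}}(x_t)$, and for every $\lambda_{1,0}\in[1,\infty)$ one has $|\lambda_{1,t}-x_t|\to0$ as $t\to\infty$.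
   Context: This is the case $\pi_1=0$ of the two-bank leverage model, in which the large bank (leverage $\lambda_2$, memory $\omega_2$) forces the small bank (leverage $\lambda_1$, memory $\omega_1$). *)

(* Defs.v *)
From Stdlib Require Import Reals Lra.
Open Scope R_scope.

Definition Tmap (alpha gamma Se w2 x : R) : R :=
  / sqrt (w2 / x ^ 2 + (1 - w2) * alpha ^ 2 * gamma ^ 2 * Se / (1 + gamma - x) ^ 2).

Definition fmap (alpha gamma Se w1 y x : R) : R :=
  / sqrt (w1 / x ^ 2 + (1 - w1) * gamma ^ 2 * alpha ^ 2 * Se / (1 + gamma - y) ^ 2).

Definition min_period (u : nat -> R) (p : nat) : Prop :=
  (0 < p)%nat /\ (forall t, u (t + p)%nat = u t) /\
  (forall q, (0 < q < p)%nat -> exists t, u (t + q)%nat <> u t).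

Fixpoint forced (alpha gamma Se w1 : R) (l2 : nat -> R) (x0 : R) (t : nat) : R :=
  match t with
  | O => x0
  | S t' => fmap alpha gamma Se w1 (l2 t') (forced alpha gamma Se w1 l2 x0 t')
  end.

(* Main.v *)
Require Import Defs.
From Stdlib Require Import Reals Lra Lia Psatz Classical.
Open Scope R_scope.

Fixpoint U (w : R) (c : nat -> R) (u0 : R) (t : nat) : R :=
  match t with O => u0 | S t' => w * U w c u0 t' + c t' end.

Lemma U_aff w c u0 t : U w c u0 t = w ^ t * u0 + U w c 0 t.
Proof. induction t; simpl; [ring| rewrite IHt; ring]. Qed.

Lemma U_nonneg w c u0 m : 0 <= w -> 0 < m -> (forall t, m <= c t) -> 0 <= u0 ->
  forall t, 0 <= U w c u0 t /\ m <= U w c u0 (S t).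
Proof.
  intros Hw Hm Hc Hu. induction t; simpl in *.
  - split; [lra|]. specialize (Hc 0%nat). nra.
  - destruct IHt as [H1 H2]. split; [lra|]. specialize (Hc (S t)). nra.
Qed.

Lemma U_pos w c u0 m : 0 <= w -> 0 < m -> (forall t, m <= c t) -> 0 < u0 ->
  forall t, 0 < U w c u0 t.
Proof.
  intros Hw Hm Hc Hu t. destruct t; simpl; [lra|].
  destruct (U_nonneg w c u0 m Hw Hm Hc ltac:(lra) t). specialize (Hc t). nra.
Qed.

Lemma U_per w c u0 p : (forall t, c (t + p)%nat = c t) -> U w c u0 p = u0 ->
  forall t, U w c u0 (t + p) = U w c u0 t.
Proof.
  intros Hc Hf. induction t; simpl; [exact Hf|]. rewrite IHt, Hc. reflexivity.
Qed.

Lemma pow_le1 w n : 0 <= w <= 1 -> w ^ n <= 1.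
Proof. intros H; induction n; simpl; [lra|]. pose proof (pow_le w n). nra. Qed.

Lemma inv_sqrt_sq w u : 0 < u -> w / (/ sqrt u) ^ 2 = w * u.
Proof.
  intros Hu. pose proof (sqrt_lt_R0 u Hu). pose proof (sqrt_sqrt u ltac:(lra)).
  rewrite <- H0 at 2. field. lra.
Qed.

Definition cc alpha gamma Se w1 (l2 : nat -> R) (t : nat) : R :=
  (1 - w1) * gamma ^ 2 * alpha ^ 2 * Se / (1 + gamma - l2 t) ^ 2.

Lemma forced_U alpha gamma Se w1 l2 x0 m : 0 <= w1 -> 0 < m ->
  (forall t, m <= cc alpha gamma Se w1 l2 t) -> 0 < x0 ->
  forall t, forced alpha gamma Se w1 l2 x0 t =
    / sqrt (U w1 (cc alpha gamma Se w1 l2) (/ x0 ^ 2) t).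
Proof.
  intros Hw Hm Hc Hx t. induction t; simpl.
  - assert (E : sqrt (/ (x0 * (x0 * 1))) = / x0).
    { apply sqrt_lem_1. left; apply Rinv_0_lt_compat; nra.
      left; apply Rinv_0_lt_compat; lra. field; lra. }
    rewrite E, Rinv_inv. reflexivity.
  - rewrite IHt. unfold fmap. rewrite inv_sqrt_sq. reflexivity.
    apply (U_pos w1 _ _ m); auto. apply Rinv_0_lt_compat; nra.
Qed.

Lemma inv_sqrt_lip a b m : 0 < m -> m <= a -> m <= b ->
  Rabs (/ sqrt a - / sqrt b) <= Rabs (a - b) * / (sqrt m ^ 3).
Proof.
  intros Hm Ha Hb.
  pose proof (sqrt_lt_R0 m Hm) as Hsm.
  assert (Hs1 : sqrt m <= sqrt a) by (apply sqrt_le_1_alt; lra).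
  assert (Hr1 : sqrt m <= sqrt b) by (apply sqrt_le_1_alt; lra).
  pose proof (sqrt_sqrt a ltac:(lra)) as Ea.
  pose proof (sqrt_sqrt b ltac:(lra)) as Eb.
  set (s := sqrt a) in *. set (r := sqrt b) in *. set (q := sqrt m) in *.
  assert (E1 : / s - / r = (r - s) * (/ s * / r)) by (field; lra).
  assert (E2 : a - b = (s - r) * (s + r)) by (rewrite <- Ea, <- Eb; ring).
  rewrite E1, E2, (Rabs_mult (r - s)), (Rabs_mult (s - r)), (Rabs_minus_sym r s).
  rewrite (Rabs_pos_eq (/ s * / r)) by (left; apply Rmult_lt_0_compat; apply Rinv_0_lt_compat; lra).
  rewrite (Rabs_pos_eq (s + r)) by lra.
  rewrite Rmult_assoc. apply Rmult_le_compat_l; [apply Rabs_pos|].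
  assert (I1 : / s <= / q) by (apply Rinv_le_contravar; lra).
  assert (I2 : / r <= / q) by (apply Rinv_le_contravar; lra).
  assert (P1 : 0 < / s) by (apply Rinv_0_lt_compat; lra).
  assert (P2 : 0 < / r) by (apply Rinv_0_lt_compat; lra).
  assert (E3 : / q * / q = q * / q ^ 3) by (field; lra).
  assert (P3 : 0 < / q ^ 3) by (apply Rinv_0_lt_compat; apply pow_lt; lra).
  apply Rle_trans with (/ q * / q). nra.
  rewrite E3. nra.
Qed.

Lemma sq_eq_pos K d1 d2 : 0 < K -> 0 < d1 -> 0 < d2 -> K / d1 ^ 2 = K / d2 ^ 2 -> d1 = d2.
Proof.
  intros HK H1 H2 E.
  assert (d1 ^ 2 = d2 ^ 2).
  { apply Rinv_eq_reg. apply (Rmult_eq_reg_l K); [|lra]. exact E. }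
  nra.
Qed.

Theorem mainTheorem4 (alpha gamma Se w1 w2 : R) (l2 : nat -> R) (p : nat) :
  0 < alpha -> 0 < gamma -> 0 < Se ->
  0 <= w1 < 1 -> 0 <= w2 <= 1 ->
  (forall t, l2 (S t) = Tmap alpha gamma Se w2 (l2 t)) ->
  (forall t, 1 <= l2 t < 1 + gamma) ->
  min_period l2 p ->
  exists x : nat -> R,
    min_period x p /\
    (forall t, x (S t) = fmap alpha gamma Se w1 (l2 t) (x t)) /\
    (forall l10, 1 <= l10 ->
       Un_cv (fun t => Rabs (forced alpha gamma Se w1 l2 l10 t - x t)) 0).
Proof.
  intros Ha Hg HS Hw1 Hw2 _ Hl2 [Hp [Hper Hmin]].
  set (c := cc alpha gamma Se w1 l2).
  set (m := (1 - w1) * alpha ^ 2 * Se).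
  assert (Hm : 0 < m) by (unfold m; apply Rmult_lt_0_compat; [|lra];
                          apply Rmult_lt_0_compat; [lra| apply pow_lt; lra]).
  assert (HK : 0 < (1 - w1) * gamma ^ 2 * alpha ^ 2 * Se).
  { repeat apply Rmult_lt_0_compat; try lra; apply pow_lt; lra. }
  assert (Hcm : forall t, m <= c t).
  { intro t. unfold c, cc. destruct (Hl2 t) as [L1 L2].
    assert (Hd : 0 < (1 + gamma - l2 t) ^ 2) by (apply pow_lt; lra).
    assert (Hd2 : (1 + gamma - l2 t) ^ 2 <= gamma ^ 2) by nra.
    apply Rle_trans with ((1 - w1) * gamma ^ 2 * alpha ^ 2 * Se / gamma ^ 2).
    - right. unfold m. field. lra.
    - unfold Rdiv. apply Rmult_le_compat_l; [lra|]. apply Rinv_le_contravar; lra. }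
  assert (Hcp : forall t, c (t + p)%nat = c t) by (intro t; unfold c, cc; rewrite Hper; reflexivity).
  set (B := U w1 c 0 p).
  assert (HB : 0 < B).
  { unfold B. destruct p as [|p']; [lia|]. simpl.
    destruct (U_nonneg w1 c 0 m ltac:(lra) Hm Hcm ltac:(lra) p'). specialize (Hcm p'). nra. }
  assert (Hwp : w1 ^ p < 1).
  { destruct p as [|p']; [lia|]. simpl. pose proof (pow_le1 w1 p' ltac:(lra)).
    pose proof (pow_le w1 p' ltac:(lra)). nra. }
  set (v0 := B / (1 - w1 ^ p)).
  assert (Hv0 : 0 < v0) by (unfold v0; apply Rdiv_lt_0_compat; lra).
  assert (Hfix : U w1 c v0 p = v0).
  { rewrite U_aff. fold B. unfold v0. field. lra. }
  assert (HUpos : forall t, 0 < U w1 c v0 t) by (apply (U_pos w1 c v0 m); auto; lra).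
  set (x := fun t => / sqrt (U w1 c v0 t)).
  exists x. split; [split; [exact Hp| split] | split].
  - intro t. unfold x. rewrite U_per; auto.
  - intros q Hq. destruct (Hmin q Hq) as [t0 Ht0].
    destruct (classic (exists t, x (t + q)%nat <> x t)) as [H|H]; [exact H|].
    exfalso.
    assert (Hx : forall t, U w1 c v0 (t + q) = U w1 c v0 t).
    { intro t. destruct (Req_dec (x (t + q)%nat) (x t)) as [e|ne];
        [|exfalso; apply H; exists t; exact ne].
      unfold x in e. apply Rinv_eq_reg in e.
      apply sqrt_inj in e; auto; left; apply HUpos. }
    assert (E := Hx (S t0)). simpl in E. rewrite (Hx t0) in E.
    assert (Ec : c (t0 + q)%nat = c t0) by lra.
    unfold c, cc in Ec. apply Ht0.
    destruct (Hl2 t0), (Hl2 (t0 + q)%nat).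
    apply sq_eq_pos in Ec; auto; lra.
  - intro t. unfold x. simpl. unfold fmap. rewrite inv_sqrt_sq by apply HUpos.
    reflexivity.
  - intros l10 Hl10.
    assert (Hpos : 0 < l10) by lra.
    set (a0 := / l10 ^ 2).
    assert (Ha0 : 0 < a0) by (unfold a0; apply Rinv_0_lt_compat; apply pow_lt; lra).
    set (D := Rabs (a0 - v0) * / (sqrt m ^ 3)).
    assert (HD : 0 <= D).
    { unfold D. apply Rmult_le_pos; [apply Rabs_pos|]. left; apply Rinv_0_lt_compat.
      apply pow_lt. apply sqrt_lt_R0; lra. }
    assert (Bnd : forall k, Rabs (forced alpha gamma Se w1 l2 l10 (S k) - x (S k))
                            <= Rabs (w1 ^ (S k)) * D).
    { intro k. rewrite (forced_U alpha gamma Se w1 l2 l10 m) by (auto; lra).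
      fold c. fold a0. unfold x.
      eapply Rle_trans. apply inv_sqrt_lip with (m := m); auto.
      apply (U_nonneg w1 c a0 m); auto; lra.
      apply (U_nonneg w1 c v0 m); auto; lra.
      rewrite (U_aff w1 c a0), (U_aff w1 c v0).
      replace (w1 ^ S k * a0 + U w1 c 0 (S k) - (w1 ^ S k * v0 + U w1 c 0 (S k)))
        with (w1 ^ S k * (a0 - v0)) by ring.
      unfold D. rewrite Rabs_mult. right; ring. }
    intros eps Heps.
    destruct (pow_lt_1_zero w1 ltac:(rewrite Rabs_pos_eq; lra) (eps / (D + 1)))
      as [N HN].
    { apply Rdiv_lt_0_compat; lra. }
    exists (S N). intros n Hn. unfold R_dist. rewrite Rminus_0_r, Rabs_Rabsolu.
    destruct n as [|k]; [lia|].
    eapply Rle_lt_trans. apply Bnd.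
    specialize (HN (S k) ltac:(lia)).
    pose proof (Rabs_pos (w1 ^ S k)).
    apply Rle_lt_trans with (Rabs (w1 ^ S k) * (D + 1)). nra.
    apply Rmult_lt_reg_r with (/ (D + 1)). apply Rinv_0_lt_compat; lra.
    rewrite Rmult_assoc, Rinv_r by lra. unfold Rdiv in HN. lra.
Qed.
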